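(* Let $(X,T)$ be a topological dynamical system and let $(K(X),T_K)$ be the induced system on the hyperspace. The following are equivalent: (1) $(K(X),T_K)$ is proximal; (2) $\bigcap_{n=0}^\infty T^nX$ is a singleton; (3) $X$ is a uniformly proximal set, i.e. for every $\varepsilon>0$ there is $n\in\mathbb{N}$ with $\operatorname{diam}(T^nX)<\varepsilon$.
   Context: A topological dynamical system $(X,T)$ consists of a non-empty compact metric space $(X,d)$ and a continuous map $T:X\to X$ (not necessarily surjective). $K(X)$ is the space of non-empty closed subsets of $X$ with the Hausdorff metric $d_H(A,B)=\max\{\max_{x\in A}\min_{y\in B}d(x,y),\max_{y\in B}\min_{x\in A}d(x,y)\}$, and $T_K(C)=T(C)$. A system is proximal if every pair $(u,v)$ satisfies $\liminf_{n\to\infty}\rho(T^nu,T^nv)=0$ for the relevant metric $\rho$. *)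

(* Defs.v *)
From Stdlib Require Import Reals.
Open Scope R_scope.

Record is_metric (X : Type) (d : X -> X -> R) : Prop := {
  metric_nonneg : forall x y, 0 <= d x y;
  metric_eq0 : forall x y, d x y = 0 <-> x = y;
  metric_sym : forall x y, d x y = d y x;
  metric_tri : forall x y z, d x z <= d x y + d y z
}.

Definition seq_conv {X : Type} (d : X -> X -> R) (u : nat -> X) (l : X) : Prop :=
  forall eps, 0 < eps -> exists N, forall n, (n >= N)%nat -> d (u n) l < eps.

(* Compactness of the metric space (X,d), as sequential compactness
   (equivalent to cover compactness for metric spaces). *)
Definition compact_space {X : Type} (d : X -> X -> R) : Prop :=
  forall u : nat -> X, exists (phi : nat -> nat) (l : X),
    (forall n, (phi n < phi (S n))%nat) /\ seq_conv d (fun n => u (phi n)) l.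

Definition continuous_map {X : Type} (d : X -> X -> R) (T : X -> X) : Prop :=
  forall x eps, 0 < eps -> exists delta, 0 < delta /\
    forall y, d x y < delta -> d (T x) (T y) < eps.

Definition TDS {X : Type} (d : X -> X -> R) (T : X -> X) : Prop :=
  inhabited X /\ is_metric X d /\ compact_space d /\ continuous_map d T.

Definition closed_set {X : Type} (d : X -> X -> R) (A : X -> Prop) : Prop :=
  forall u l, (forall n, A (u n)) -> seq_conv d u l -> A l.

Definition in_KX {X : Type} (d : X -> X -> R) (A : X -> Prop) : Prop :=
  (exists x, A x) /\ closed_set d A.

Fixpoint iter {X : Type} (n : nat) (T : X -> X) (x : X) : X :=
  match n with O => x | S m => T (iter m T x) end.

(* T_K^n A = T^n(A), the image set *)
Definition img_iter {X : Type} (T : X -> X) (n : nat) (A : X -> Prop) : X -> Prop :=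
  fun y => exists x, A x /\ iter n T x = y.

Definition is_glb (E : R -> Prop) (m : R) : Prop :=
  (forall x, E x -> m <= x) /\ (forall m', (forall x, E x -> m' <= x) -> m' <= m).

Definition pt_set_dist {X : Type} (d : X -> X -> R) (x : X) (B : X -> Prop) (r : R) : Prop :=
  is_glb (fun s => exists y, B y /\ s = d x y) r.

Definition excess {X : Type} (d : X -> X -> R) (A B : X -> Prop) (r : R) : Prop :=
  is_lub (fun s => exists x, A x /\ pt_set_dist d x B s) r.

Definition hausdorff_dist {X : Type} (d : X -> X -> R) (A B : X -> Prop) (r : R) : Prop :=
  exists e1 e2, excess d A B e1 /\ excess d B A e2 /\ r = Rmax e1 e2.

(* (K(X),T_K) proximal: liminf_n d_H(T_K^n A, T_K^n B) = 0 for all A,B in K(X)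
   (d_H >= 0, so liminf = 0 iff d_H < eps infinitely often for every eps). *)
Definition KX_proximal {X : Type} (d : X -> X -> R) (T : X -> X) : Prop :=
  forall A B, in_KX d A -> in_KX d B ->
    forall eps, 0 < eps -> forall N, exists n r, (n >= N)%nat /\
      hausdorff_dist d (img_iter T n A) (img_iter T n B) r /\ r < eps.

Definition diam {X : Type} (d : X -> X -> R) (S : X -> Prop) (r : R) : Prop :=
  is_lub (fun s => exists x y, S x /\ S y /\ s = d x y) r.

Definition fullset {X : Type} : X -> Prop := fun _ => True.

Definition omega_core {X : Type} (T : X -> X) : X -> Prop :=
  fun y => forall n, img_iter T n fullset y.

Definition singleton_set {X : Type} (S : X -> Prop) : Prop :=
  exists x, forall y, S y <-> y = x.

Definition uniformly_proximal_space {X : Type} (d : X -> X -> R) (T : X -> X) : Prop :=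
  forall eps, 0 < eps -> exists n r, diam d (img_iter T n fullset) r /\ r < eps.

(* Main.v *)
Require Import Defs.
From Stdlib Require Import Reals.
From Stdlib Require Import Lra Lia Classical ClassicalEpsilon.
Open Scope R_scope.

Lemma iter_add {X : Type} (T : X -> X) a b x :
  iter (a + b) T x = iter a T (iter b T x).
Proof. induction a; simpl; congruence. Qed.

Lemma img_mono {X : Type} (T : X -> X) m k y :
  (m >= k)%nat -> img_iter T m fullset y -> img_iter T k fullset y.
Proof.
  intros Hmk [x [_ Hx]]. exists (iter (m - k) T x). split; [exact I|].
  rewrite <- iter_add. replace (k + (m - k))%nat with m by lia. auto.
Qed.

Lemma img_full {X : Type} (T : X -> X) m A y :
  img_iter T m A y -> img_iter T m fullset y.
Proof. intros [x [_ Hx]]. exists x. split; [exact I|exact Hx]. Qed.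

Lemma incr_ge (phi : nat -> nat) :
  (forall n, (phi n < phi (S n))%nat) -> forall n, (phi n >= n)%nat.
Proof. intros H n; induction n; [lia|]. specialize (H n); lia. Qed.

Lemma conv_sub {X : Type} (d : X -> X -> R) u l f :
  seq_conv d u l -> (forall n, (f n >= n)%nat) -> seq_conv d (fun n => u (f n)) l.
Proof.
  intros H Hf eps He. destruct (H eps He) as [N HN]. exists N.
  intros n Hn. apply HN. specialize (Hf n); lia.
Qed.

Lemma small_eq {X : Type} (d : X -> X -> R) x y :
  is_metric X d -> (forall eps, 0 < eps -> d x y < eps) -> x = y.
Proof.
  intros M H. apply (metric_eq0 _ _ M). pose proof (metric_nonneg _ _ M x y).
  destruct (Req_dec (d x y) 0) as [E|E]; auto.
  specialize (H (d x y) ltac:(lra)). lra.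
Qed.

Lemma conv_unique {X : Type} (d : X -> X -> R) u a b :
  is_metric X d -> seq_conv d u a -> seq_conv d u b -> a = b.
Proof.
  intros M Ha Hb. apply (small_eq d); auto. intros eps He.
  destruct (Ha (eps/2) ltac:(lra)) as [N1 H1].
  destruct (Hb (eps/2) ltac:(lra)) as [N2 H2].
  specialize (H1 (max N1 N2) ltac:(lia)). specialize (H2 (max N1 N2) ltac:(lia)).
  pose proof (metric_tri _ _ M a (u (max N1 N2)) b).
  rewrite (metric_sym _ _ M a (u (max N1 N2))) in H. lra.
Qed.

Lemma T_seqcont {X : Type} (d : X -> X -> R) (T : X -> X) u l :
  is_metric X d -> continuous_map d T -> seq_conv d u l ->
  seq_conv d (fun n => T (u n)) (T l).
Proof.
  intros M C H eps He. destruct (C l eps He) as [del [Hd Hc]].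
  destruct (H del Hd) as [N HN]. exists N. intros n Hn.
  rewrite (metric_sym _ _ M). apply Hc. rewrite (metric_sym _ _ M). auto.
Qed.

Lemma iter_seqcont {X : Type} (d : X -> X -> R) (T : X -> X) k u l :
  is_metric X d -> continuous_map d T -> seq_conv d u l ->
  seq_conv d (fun n => iter k T (u n)) (iter k T l).
Proof.
  intros M C H. induction k; simpl; auto.
  apply (T_seqcont d T (fun n => iter k T (u n))); auto.
Qed.

Lemma img_closed {X : Type} (d : X -> X -> R) (T : X -> X) k :
  TDS d T -> Defs.closed_set d (img_iter T k fullset).
Proof.
  intros [_ [M [K C]]] z l Hz Hc.
  pose (w := fun n => proj1_sig (constructive_indefinite_description _ (Hz n))).
  assert (Hw : forall n, iter k T (w n) = z n).
  { intro n. unfold w. destruct (constructive_indefinite_description _ (Hz n)) as [x [Htriv Hx]].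
    simpl. exact Hx. }
  destruct (K w) as [psi [w0 [Hpsi Hconv]]].
  pose proof (iter_seqcont d T k _ _ M C Hconv) as H1.
  pose proof (conv_sub d z l psi Hc (incr_ge psi Hpsi)) as H2.
  exists w0. split; [exact I|].
  apply (conv_unique d (fun n => iter k T (w (psi n)))); auto.
  intros eps He. destruct (H2 eps He) as [N HN]. exists N. intros n Hn.
  rewrite Hw. auto.
Qed.

Lemma core_limit {X : Type} (d : X -> X -> R) (T : X -> X) z f l :
  TDS d T -> (forall n, (f n >= n)%nat) ->
  (forall n, img_iter T (f n) fullset (z n)) -> seq_conv d z l -> omega_core T l.
Proof.
  intros Td Hf Hz Hc k.
  apply (img_closed d T k Td (fun n => z (n + k)%nat)).
  - intro n. apply (img_mono T (f (n + k)%nat)); auto. specialize (Hf (n+k)%nat); lia.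
  - apply conv_sub; auto. intro; lia.
Qed.

Lemma glb_exists (E : R -> Prop) :
  (exists x, E x) -> (forall x, E x -> 0 <= x) -> exists m, is_glb E m.
Proof.
  intros [x Ex] Hp.
  destruct (completeness (fun y => E (- y))) as [m [Hub Hl]].
  - exists 0. intros y Hy. specialize (Hp _ Hy). lra.
  - exists (- x). rewrite Ropp_involutive. auto.
  - exists (- m). split.
    + intros y Hy. assert (- y <= m); [|lra]. apply Hub. rewrite Ropp_involutive; auto.
    + intros m' Hm'. assert (m <= - m'); [|lra]. apply Hl. intros y Hy.
      specialize (Hm' _ Hy). lra.
Qed.

Lemma lub_le (E : R -> Prop) c :
  (exists x, E x) -> (forall x, E x -> x <= c) -> exists m, is_lub E m /\ m <= c.
Proof.
  intros Hne Hb. destruct (completeness E) as [m [Hub Hl]]; auto.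
  - exists c. intros y Hy; auto.
  - exists m. split; [split; auto|]. apply Hl. intros y Hy; auto.
Qed.

Lemma diam_of_bound {X : Type} (d : X -> X -> R) S c :
  (exists x, S x) -> (forall x y, S x -> S y -> d x y <= c) ->
  exists r, diam d S r /\ r <= c.
Proof.
  intros [x Sx] Hb. apply lub_le.
  - exists (d x x). exists x, x. auto.
  - intros s [a [b [Ha [Hb' ->]]]]. auto.
Qed.

Lemma diam_bound {X : Type} (d : X -> X -> R) S r x y :
  diam d S r -> S x -> S y -> d x y <= r.
Proof. intros [H _] Hx Hy. apply H. exists x, y. auto. Qed.

Lemma excess_of_bound {X : Type} (d : X -> X -> R) A B c :
  is_metric X d -> (exists x, A x) -> (exists y, B y) ->
  (forall x y, A x -> B y -> d x y <= c) -> exists r, excess d A B r /\ r <= c.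
Proof.
  intros M [x Ax] [y By] Hb. apply lub_le.
  - destruct (glb_exists (fun s => exists y, B y /\ s = d x y)) as [s Hs].
    + exists (d x y). eauto.
    + intros s [z [_ ->]]. apply (metric_nonneg _ _ M).
    + exists s, x. auto.
  - intros s [a [Aa [Hlb _]]]. apply Rle_trans with (d a y).
    + apply Hlb. eauto.
    + auto.
Qed.

Lemma haus_of_bound {X : Type} (d : X -> X -> R) A B c :
  is_metric X d -> (exists x, A x) -> (exists y, B y) ->
  (forall x y, A x -> B y -> d x y <= c) -> exists r, hausdorff_dist d A B r /\ r <= c.
Proof.
  intros M HA HB Hb.
  destruct (excess_of_bound d A B c M HA HB Hb) as [e1 [H1 L1]].
  destruct (excess_of_bound d B A c M HB HA) as [e2 [H2 L2]].
  { intros x y Bx Ay. rewrite (metric_sym _ _ M). auto. }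
  exists (Rmax e1 e2). split.
  - exists e1, e2. auto.
  - apply Rmax_lub; auto.
Qed.

Definition UP {X : Type} (d : X -> X -> R) (T : X -> X) : Prop :=
  forall eps, 0 < eps -> exists n, forall x y,
    img_iter T n fullset x -> img_iter T n fullset y -> d x y < eps.

Lemma P1 {X : Type} (d : X -> X -> R) (T : X -> X) :
  TDS d T -> KX_proximal d T -> UP d T.
Proof.
  intros Td Hp eps He. destruct Td as [[x0] [M [K C]]].
  assert (HA : in_KX d (@fullset X)).
  { split. exists x0; exact I. intros u l _ _; exact I. }
  assert (HB : in_KX d (fun y => y = x0)).
  { split. exists x0; auto. intros u l Hu Hc.
    symmetry. apply (conv_unique d u); auto. intros e Hee. exists O. intros n _.
    rewrite Hu. rewrite (proj2 (metric_eq0 _ _ M x0 x0) eq_refl). auto. }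
  destruct (Hp _ _ HA HB (eps/2) ltac:(lra) O) as [n [r [_ [[e1 [e2 [[Hub _] [_ Hr]]]] Hlt]]]].
  exists n.
  set (p := iter n T x0).
  assert (Hd : forall y, img_iter T n fullset y -> d y p <= r).
  { intros y Hy.
    destruct (glb_exists (fun s => exists z, img_iter T n (fun y => y = x0) z /\ s = d y z))
      as [s [Hlb Hgr]].
    - exists (d y p). exists p. split; auto. exists x0; auto.
    - intros s [z [_ ->]]. apply (metric_nonneg _ _ M).
    - assert (Hs : d y p <= s).
      { apply Hgr. intros s' [z [[x [-> Hz]] ->]]. subst z. apply Rle_refl. }
      assert (s <= e1). { apply Hub. exists y. split; auto. split; auto. }
      pose proof (Rmax_l e1 e2). lra. }
  intros x y Hx Hy.
  pose proof (metric_tri _ _ M x p y). rewrite (metric_sym _ _ M p y) in H.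
  pose proof (Hd x Hx). pose proof (Hd y Hy). lra.
Qed.

Lemma P2 {X : Type} (d : X -> X -> R) (T : X -> X) :
  TDS d T -> UP d T -> KX_proximal d T.
Proof.
  intros Td Hu A B [[a Aa] _] [[b Bb] _] eps He N.
  destruct Td as [_ [M _]].
  destruct (Hu (eps/2) ltac:(lra)) as [n0 Hn0].
  destruct (haus_of_bound d (img_iter T (max N n0) A) (img_iter T (max N n0) B) (eps/2) M)
    as [r [Hr Hle]].
  - exists (iter (max N n0) T a). exists a; auto.
  - exists (iter (max N n0) T b). exists b; auto.
  - intros x y Hx Hy. left. apply Hn0.
    + apply (img_mono T (max N n0)); [lia|]. eapply img_full; eauto.
    + apply (img_mono T (max N n0)); [lia|]. eapply img_full; eauto.
  - exists (max N n0), r. repeat split; auto; [lia|lra].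
Qed.

Lemma P3 {X : Type} (d : X -> X -> R) (T : X -> X) :
  TDS d T -> UP d T -> singleton_set (omega_core T).
Proof.
  intros Td Hu. pose proof Td as Td'. destruct Td' as [[x0] [M [K C]]].
  destruct (K (fun n => iter n T x0)) as [phi [l [Hphi Hc]]].
  assert (Hl : omega_core T l).
  { apply (core_limit d T (fun n => iter (phi n) T x0) phi l Td (incr_ge phi Hphi)); auto.
    intro n. exists x0. split; [exact I|auto]. }
  exists l. intro y. split; [|intros ->; auto].
  intro Hy. apply (small_eq d); auto. intros eps He.
  destruct (Hu eps He) as [n Hn]. apply Hn; auto.
Qed.

Lemma P4 {X : Type} (d : X -> X -> R) (T : X -> X) :
  TDS d T -> singleton_set (omega_core T) -> UP d T.
Proof.
  intros Td [p Hp]. pose proof Td as Td'. destruct Td' as [[x0] [M [K C]]].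
  destruct (classic (UP d T)) as [H|H]; auto. exfalso.
  apply not_all_ex_not in H. destruct H as [eps H].
  apply imply_to_and in H. destruct H as [He H].
  assert (Hpair : forall n, exists q : X * X, img_iter T n fullset (fst q) /\
            img_iter T n fullset (snd q) /\ d (fst q) (snd q) >= eps).
  { intro n. apply NNPP. intro Hn. apply H. exists n. intros x y Hx Hy.
    destruct (Rlt_or_le (d x y) eps) as [L|L]; auto. exfalso. apply Hn.
    exists (x, y). simpl. repeat split; auto; lra. }
  pose (pr := fun n => proj1_sig (constructive_indefinite_description _ (Hpair n))).
  assert (Hpr : forall n, img_iter T n fullset (fst (pr n)) /\
            img_iter T n fullset (snd (pr n)) /\ d (fst (pr n)) (snd (pr n)) >= eps).
  { intro n. unfold pr. apply proj2_sig. }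
  destruct (K (fun n => fst (pr n))) as [phi [a [Hphi Ha]]].
  destruct (K (fun n => snd (pr (phi n)))) as [psi [b [Hpsi Hb]]].
  pose proof (incr_ge phi Hphi) as Gphi. pose proof (incr_ge psi Hpsi) as Gpsi.
  assert (Gg : forall n, (phi (psi n) >= n)%nat).
  { intro n. specialize (Gphi (psi n)). specialize (Gpsi n). lia. }
  pose proof (conv_sub d _ a psi Ha Gpsi) as Ha'. simpl in Ha'.
  assert (Ca : omega_core T a).
  { apply (core_limit d T (fun n => fst (pr (phi (psi n)))) (fun n => phi (psi n)) a Td Gg); auto.
    intro n. apply Hpr. }
  assert (Cb : omega_core T b).
  { apply (core_limit d T (fun n => snd (pr (phi (psi n)))) (fun n => phi (psi n)) b Td Gg); auto.
    intro n. apply Hpr. }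
  apply Hp in Ca. apply Hp in Cb. subst a b.
  destruct (Ha' (eps/2) ltac:(lra)) as [N1 H1].
  destruct (Hb (eps/2) ltac:(lra)) as [N2 H2].
  specialize (H1 (max N1 N2) ltac:(lia)). specialize (H2 (max N1 N2) ltac:(lia)).
  simpl in H1, H2.
  set (q := pr (phi (psi (max N1 N2)))) in *.
  pose proof (metric_tri _ _ M (fst q) p (snd q)).
  rewrite (metric_sym _ _ M p (snd q)) in H0.
  destruct (Hpr (phi (psi (max N1 N2)))) as [_ [_ Hge]]. fold q in Hge. lra.
Qed.

Lemma P5 {X : Type} (d : X -> X -> R) (T : X -> X) :
  TDS d T -> (UP d T <-> uniformly_proximal_space d T).
Proof.
  intros [[x0] [M _]]. split.
  - intros Hu eps He. destruct (Hu (eps/2) ltac:(lra)) as [n Hn].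
    destruct (diam_of_bound d (img_iter T n fullset) (eps/2)) as [r [Hr Hle]].
    + exists (iter n T x0). exists x0. split; [exact I|auto].
    + intros x y Hx Hy. left. auto.
    + exists n, r. split; auto. lra.
  - intros Hu eps He. destruct (Hu eps He) as [n [r [Hr Hlt]]]. exists n.
    intros x y Hx Hy. pose proof (diam_bound d _ r x y Hr Hx Hy). lra.
Qed.

Theorem mainTheorem11 (X : Type) (d : X -> X -> R) (T : X -> X) :
  TDS d T ->
  (KX_proximal d T <-> singleton_set (omega_core T)) /\
  (singleton_set (omega_core T) <-> uniformly_proximal_space d T).
Proof.
  intros Td. pose proof (P5 d T Td) as H5. split; split; intro H.
  - apply (P3 d); auto. apply P1; auto.
  - apply P2; auto. apply P4; auto.
  - apply H5. apply P4; auto.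
  - apply (P3 d); auto. apply H5; auto.
Qed.
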